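(* Let $h>1$, $q=2^h$, and let $U$ be a nonempty proper subset of $\mathrm{GF}(q)^{\star}$. Let $\Omega$ be a regular hyperoval of $PG(2,q^2)$. Then there are at least two affine points $P(x,y)\in\Omega$ with $\|x\|\in U$.
   Context: $\|x\|=x^{q+1}$ for $x\in\mathrm{GF}(q^2)$. Points of $PG(2,q^2)$ are written in affine coordinates $P(x,y)$ when not on the line at infinity. For $q$ even, a regular hyperoval of $PG(2,q^2)$ is the union of a non-degenerate conic and its nucleus (the common point of all its tangent lines). *)

(* Defs.v *)
From HB Require Import structures.
From mathcomp Require Import all_boot all_order all_algebra all_field.
Set Implicit Arguments. Unset Strict Implicit. Unset Printing Implicit Defensive.
Import GRing.Theory.
Local Open Scope ring_scope.

(* Homogeneous coordinates (X, Y, Z) of PG(2, F) are triples ((X, Y), Z). *)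
Definition pscale (F : fieldType) (k : F) (v : F * F * F) : F * F * F :=
  (k * v.1.1, k * v.1.2, k * v.2).

Definition qform (F : fieldType) (a b c d e f : F) (v : F * F * F) : F :=
  let: (x, y, z) := v in
  a * x ^+ 2 + b * y ^+ 2 + c * z ^+ 2 + d * x * y + e * x * z + f * y * z.

(* Non-degeneracy of the conic Q = 0 in characteristic 2 (half-discriminant
   non-zero; equivalently Q does not vanish on the radical of its polar form). *)
Definition qform_nondeg (F : fieldType) (a b c d e f : F) : bool :=
  d * e * f + a * f ^+ 2 + b * e ^+ 2 + c * d ^+ 2 != 0.

(* Nucleus of the conic in characteristic 2: the radical of the polar form
   B(u,v) = Q(u+v)-Q(u)-Q(v), i.e. the point (f : e : d); all tangent lines
   pass through it. *)
Definition qnucleus (F : fieldType) (a b c d e f : F) : F * F * F := (f, e, d).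

Definition regular_hyperoval (F : finFieldType) (Om : pred (F * F * F)) : Prop :=
  exists a b c d e f : F,
    qform_nondeg a b c d e f /\
    forall v : F * F * F,
      Om v = (v != (0, 0, 0)) &&
             ((qform a b c d e f v == 0) ||
              [exists k : F, v == pscale k (qnucleus a b c d e f)]).

Definition subfield_units (F : finFieldType) (q : nat) : {set F} :=
  [set x : F | (x ^+ q == x) && (x != 0)].

(* Main.v *)
Require Import Defs.
From HB Require Import structures.
From mathcomp Require Import all_boot all_order all_algebra all_field.
From mathcomp Require Import ring zify.
Import GRing.Theory.
Local Open Scope ring_scope.
Set Implicit Arguments. Unset Strict Implicit.

Lemma card_roots_lt (F : finFieldType) (p : {poly F}) :
  p != 0 -> (#|[set x | root p x]| < size p)%N.
Proof.
move=> p0; rewrite cardE; apply: max_poly_roots => //.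
  by apply/allP=> x; rewrite mem_enum inE.
exact: enum_uniq.
Qed.

Lemma card_le_fib (T T' : finType) (f : T -> T') (A : {set T}) (B : {set T'}) m :
  (forall x, x \in A -> f x \in B) ->
  (forall y, y \in B -> #|[set x in A | f x == y]| <= m)%N ->
  (#|A| <= #|B| * m)%N.
Proof.
move=> fAB fib.
rewrite -sum1_card (partition_big f (mem B)) //=.
rewrite -sum_nat_const; apply: leq_sum => y yB.
apply: leq_trans (fib y yB).
by rewrite -sum1_card; apply: eq_leq; apply: eq_bigl => x; rewrite inE.
Qed.

Section Char2.
Variable F : finFieldType.
Hypothesis ch2 : 2 \in [pchar F].

Lemma two0 : (2 : F) = 0.
Proof. by have := mulrn_pchar ch2 (1 : F); rewrite -[1 *+ 2]/(2%:R). Qed.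

Lemma sqrD (x y : F) : (x + y) ^+ 2 = x ^+ 2 + y ^+ 2.
Proof. by rewrite sqrrD mulr2n (addrr_pchar2 ch2) addr0. Qed.

Lemma frobD n (x y : F) : (x + y) ^+ (2 ^ n) = x ^+ (2 ^ n) + y ^+ (2 ^ n).
Proof.
elim: n => [|n IH]; first by rewrite expn0 !expr1.
by rewrite expnSr !exprM IH sqrD.
Qed.

Lemma frobN n (x : F) : (- x) ^+ (2 ^ n) = - x ^+ (2 ^ n).
Proof. by rewrite !(oppr_pchar2 ch2). Qed.

Definition trn n (x : F) := \sum_(i < n) x ^+ (2 ^ i).

Lemma trnD n x y : trn n (x + y) = trn n x + trn n y.
Proof. by rewrite /trn -big_split /=; apply: eq_bigr => i _; rewrite frobD. Qed.

Lemma trn0 n : trn n 0 = 0.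
Proof. by rewrite /trn big1 // => i _; rewrite expr0n expn_eq0. Qed.

Lemma trn_sq n x : trn n (x ^+ 2) + trn n x = x ^+ (2 ^ n) + x.
Proof.
elim: n => [|n IH].   by rewrite /trn !big_ord0 addr0 expn0 expr1; apply/esym/(addrr_pchar2 ch2).
rewrite /trn !big_ord_recr /= -/(trn n _).
rewrite -exprM -expnS addrACA IH [x ^+ (2 ^ n) + _]addrC addrA.
by rewrite addrAC -[x + _ + _]addrA (addrr_pchar2 ch2) addr0 addrC.
Qed.

Lemma trn_sqr n x : (trn n x) ^+ 2 = trn n (x ^+ 2).
Proof.
rewrite /trn; elim/big_rec2: _ => [|i a b _ <-]; first by rewrite expr0n.
by rewrite sqrD -!exprM mulnC.
Qed.

Lemma sizeP n : size (\sum_(i < n.+1) ('X^(2 ^ i) : {poly F})) = (2 ^ n).+1.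
Proof.
elim: n => [|n IH]; first by rewrite big_ord_recr big_ord0 /= add0r size_polyXn.
rewrite big_ord_recr /= addrC size_addl size_polyXn // IH ltnS expnS.
by rewrite ltn_Pmull // expn_gt0.
Qed.

Lemma card_trn0 n : (#|[set x : F | trn n.+1 x == 0%R]| <= 2 ^ n)%N.
Proof.
set P := \sum_(i < n.+1) ('X^(2 ^ i) : {poly F}).
have PE x : P.[x] = trn n.+1 x.
  by rewrite /P horner_sum; apply: eq_bigr => i _; rewrite hornerXn.
have P0 : P != 0 by rewrite -size_poly_eq0 sizeP.
have := @card_roots_lt F P P0; rewrite sizeP ltnS.
apply: leq_trans; apply: subset_leq_card; apply/subsetP => x.
by rewrite !inE /root PE.
Qed.
End Char2.


Section Fq.
Variable F : finFieldType.
Variable h : nat.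
Hypothesis h1 : (0 < h)%N.
Hypothesis hF : #|F| = (2 ^ (h + h))%N.

Lemma ch2 : 2 \in [pchar F].
Proof. by apply: (card_finPcharP hF). Qed.


Definition cj (x : F) := x ^+ (2 ^ h).
Definition trF (x : F) := trn (h + h) x.
Definition trq (x : F) := trn h x.

Lemma expF (x : F) : x ^+ (2 ^ (h + h)) = x.
Proof. by rewrite -hF expf_card. Qed.

Lemma cjK x : cj (cj x) = x.
Proof. by rewrite /cj -exprM -expnD expF. Qed.
Lemma cjD x y : cj (x + y) = cj x + cj y.
Proof. by rewrite /cj (frobD ch2). Qed.
Lemma cjM x y : cj (x * y) = cj x * cj y.
Proof. exact: exprMn. Qed.
Lemma cjV x : cj (x^-1) = (cj x)^-1.
Proof. exact: exprVn. Qed.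
Lemma cjN x : cj (- x) = - cj x.
Proof. by rewrite !(oppr_pchar2 ch2). Qed.
Lemma cj0 : cj 0 = 0.
Proof. by rewrite /cj expr0n expn_eq0. Qed.
Lemma cj1 : cj 1 = 1.
Proof. by rewrite /cj expr1n. Qed.
Lemma cjX x n : cj (x ^+ n) = (cj x) ^+ n.
Proof. by rewrite /cj -!exprM mulnC. Qed.

Lemma ch2eq (a b : F) : a + b = 0 -> a = b.
Proof. by move/eqP; rewrite addr_eq0 (oppr_pchar2 ch2) => /eqP. Qed.

Lemma trF_cj x : trF x = trq (x + cj x).
Proof.
rewrite /trF /trq (trnD ch2) /trn. rewrite big_split_ord /=; congr (_ + _).
by apply: eq_bigr => i _; rewrite /cj -exprM -expnD.
Qed.

Lemma trF_sq x : trF (x ^+ 2) = trF x.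
Proof. by apply: ch2eq; rewrite /trF (trn_sq ch2) expF (addrr_pchar2 ch2). Qed.

Lemma bool01 (t : F) : t ^+ 2 = t -> t = 0 \/ t = 1.
Proof.
move=> tt; have : t * (t - 1) = 0 by rewrite mulrBr mulr1 -expr2 tt subrr.
by move/eqP; rewrite mulf_eq0 subr_eq0 => /orP[/eqP|/eqP]; [left|right].
Qed.

Lemma trF01 x : trF x = 0 \/ trF x = 1.
Proof. by apply: bool01; rewrite /trF (trn_sqr ch2) -/(trF _) trF_sq. Qed.

Lemma trq_sq x : cj x = x -> trq (x ^+ 2) = trq x.
Proof. by move=> cx; apply: ch2eq; rewrite /trq (trn_sq ch2) -/(cj x) cx (addrr_pchar2 ch2). Qed.

Lemma trq01 x : cj x = x -> trq x = 0 \/ trq x = 1.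
Proof. by move=> cx; apply: bool01; rewrite /trq (trn_sqr ch2) -/(trq _) trq_sq. Qed.

Definition sq (x : F) := x ^+ (2 ^ (h + h).-1).
Lemma sqK x : (sq x) ^+ 2 = x.
Proof.
rewrite /sq -exprM -expnSr prednK ?expF //.
by rewrite addn_gt0 h1.
Qed.
Lemma cj_sq x : cj (sq x) = sq (cj x).
Proof. by rewrite /cj /sq -!exprM mulnC. Qed.

Lemma AS z : trF z = 0 -> exists s, s ^+ 2 + s = z.
Proof.
move=> tz.
pose Img := [set s ^+ 2 + s | s : F].
pose K := [set x : F | trn (h + h) x == 0%R].
have ImgK : Img \subset K.
  apply/subsetP => x /imsetP [s _ ->]; rewrite inE -/(trF _).
  apply/eqP; rewrite /trF (trnD ch2) (trn_sq ch2) expF (addrr_pchar2 ch2) //.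
have cK : (#|K| <= 2 ^ (h + h).-1)%N.
  have hn : (h + h = (h + h).-1.+1)%N by rewrite prednK // addn_gt0 h1.
  by rewrite /K hn; apply: card_trn0.
have cImg : (#|[set: F]| <= #|Img| * 2)%N.
  apply: (card_le_fib (f := fun s => s ^+ 2 + s)).
    by move=> x _; apply: imset_f.
  move=> y _.
  pose P : {poly F} := 'X^2 + ('X - y%:P).
  have sP : size P = 3%N by rewrite /P size_addl size_polyXn // size_XsubC.
  have P0 : P != 0 by rewrite -size_poly_eq0 sP.
  have := @card_roots_lt F P P0; rewrite sP ltnS; apply: leq_trans.
  apply: subset_leq_card; apply/subsetP => x; rewrite !inE /root /P.
  by rewrite !hornerE subr_eq0.
have eqIK : Img = K.
  apply/eqP; rewrite eqEcard ImgK /=.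
  apply: leq_trans cK _.
  rewrite -(leq_pmul2r (isT : (0 < 2)%N)) -expnSr prednK ?addn_gt0 ?h1 //.
  by rewrite -hF -cardsT.
have : z \in K by rewrite inE -/(trF _) tz.
by rewrite -eqIK => /imsetP [s _ ->]; exists s.
Qed.
Lemma cj_eq0 x : (cj x == 0) = (x == 0).
Proof. by rewrite /cj expf_eq0 expn_gt0. Qed.

Lemma cardS : (2 ^ h <= #|[set z : F | cj z == z]|)%N.
Proof.
set q := (2 ^ h)%N.
have q1 : (0 < q)%N by rewrite expn_gt0.
set G := [set z : F | (cj z == z) && (z != 0)].
set A := [set x : F | x != 0].
have cA : #|A| = (q.-1 * q.+1)%N.
  have -> : A = [set~ 0] by apply/setP => x; rewrite !inE.
  rewrite cardsC1 hF expnD -/q.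
  by case: q q1 => // n _; rewrite mulSn mulnS /=; lia.
have le : (#|A| <= #|G| * q.+1)%N.
  apply: (card_le_fib (f := fun x => x * cj x)).
    move=> x; rewrite !inE => x0.
    rewrite cjM cjK mulrC eqxx /= mulf_neq0 //.
    by rewrite cj_eq0.
  move=> y _.
  pose P : {poly F} := 'X^(q.+1) - y%:P.
  have sP : size P = q.+2 by rewrite size_XnsubC.
  have P0 : P != 0 by rewrite -size_poly_eq0 sP.
  have := @card_roots_lt F P P0; rewrite sP ltnS; apply: leq_trans.
  apply: subset_leq_card; apply/subsetP => x; rewrite !inE /root /P.
  by rewrite !hornerE exprS subr_eq0 => /andP[_].
have cG : (q.-1 <= #|G|)%N.
  by rewrite -(leq_pmul2r (ltn0Sn q)) -cA.
have -> : [set z : F | cj z == z] = 0 |: G.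
  apply/setP => z; rewrite !inE; case: (eqVneq z 0) => [->|nz] /=.
    by rewrite cj0 !eqxx.
  by rewrite andbT.
rewrite cardsU1 !inE eqxx /=.
by move: cG; clear -q1; case: q q1 => // n _ /=; rewrite andbF /= add1n ltnS.
Qed.

Lemma trq0 : trq 0 = 0.
Proof. exact: trn0. Qed.

Lemma exists_t alpha : cj alpha = alpha -> alpha != 0 ->
  exists t, [/\ cj t = t, trq t = 1 & trq (alpha / t) = 1].
Proof.
move=> ca a0.
set S := [set z : F | cj z == z].
have cS : (2 ^ h <= #|S|)%N := cardS.
set T1 := [set t in S | trq t == 1].
set S2 := [set t in S | trq (alpha / t) == 1].
have hn : h = h.-1.+1 by rewrite prednK.
have cK : (#|S :\: T1| <= 2 ^ h.-1)%N.
  apply: leq_trans (@card_trn0 F h.-1); apply: subset_leq_card.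
  apply/subsetP => x; rewrite !inE => /andP[/negbTE x1 /eqP cx]; rewrite cx eqxx /= in x1.
  rewrite -hn -/(trq x); have [->|xx] := trq01 cx; first by rewrite eqxx.
  by rewrite xx eqxx in x1.
have e1 := cardsID T1 S.
have ST : S :&: T1 = T1.
  by apply/setIidPr/subsetP => x; rewrite inE => /andP[].
rewrite ST in e1.
have T1n0 t : t \in T1 -> t != 0.
  rewrite !inE => /andP[_]; apply: contraL => /eqP ->.
  by rewrite trq0 eq_sym oner_eq0.
have cS2 : (#|T1| <= #|S2|)%N.
  rewrite -(@card_in_imset _ _ (fun t => alpha / t) T1).
    apply: subset_leq_card; apply/subsetP => y /imsetP[t tT ->].
    have t0 := T1n0 t tT.
    move: tT; rewrite !inE => /andP[/eqP ct t1].
    rewrite cjM cjV ca ct eqxx /=.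
    have -> : alpha / (alpha / t) = t by field; apply/andP.
    by [].
  move=> t1 t2 h1' h2' /= e.
  have := T1n0 _ h1'; have := T1n0 _ h2' => n2 n1.
  by apply: invr_inj; apply: (mulfI a0).
have sub : T1 :|: S2 \subset S :\ 0.
  apply/subsetP => x; rewrite !inE => /orP[] /andP[-> t1]; rewrite andbT.
    by apply/eqP => x0; move: t1; rewrite x0 trq0 eq_sym oner_eq0.
  by apply/eqP => x0; move: t1; rewrite x0 invr0 mulr0 trq0 eq_sym oner_eq0.
have cU := subset_leq_card sub.
have e2 := cardsUI T1 S2.
have e3 := cardsD1 0 S.
have S0 : (0:F) \in S by rewrite inE cj0.
rewrite S0 /= add1n in e3.
have ex : (2 ^ h = 2 * 2 ^ h.-1)%N by rewrite {1}hn expnS.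
have : (0 < #|T1 :&: S2|)%N.
  move: e1 cK cS2 cU e2 e3 ex cS.
  move: #|T1| #|S :\: T1| #|S2| #|T1 :|: S2| #|S :\ 0| #|T1 :&: S2| #|S| (2 ^ h)%N (2 ^ h.-1)%N.
  move=> *; lia.
case/card_gt0P => t; rewrite !inE => /andP[/andP[/eqP ct /eqP t1] /andP[_ /eqP t2]].
by exists t.
Qed.

Lemma add2 (x : F) : x + x = 0.
Proof. exact: (addrr_pchar2 ch2). Qed.

Lemma CL rho tau : cj rho = rho -> rho != 0 -> (tau = 0 \/ tau = 1) ->
  exists v, v * cj v = rho /\ trF v = tau.
Proof.
move=> cr r0 [->|->].
  exists (sq rho); rewrite cj_sq cr -expr2 sqK; split => //.
  by rewrite trF_cj cj_sq cr add2 trq0.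
set alpha := sq rho.
have ca : cj alpha = alpha by rewrite /alpha cj_sq cr.
have ar : alpha ^+ 2 = rho by rewrite sqK.
have a0 : alpha != 0 by apply: contraNneq r0 => a0; rewrite -ar a0 expr0n.
have [t [ct t1 t2]] := exists_t ca a0.
have t0 : t != 0 by apply: contra_eq_neq t1 => ->; rewrite trq0 eq_sym oner_eq0.
set z := rho / t ^+ 2.
have cz : cj z = z by rewrite /z cjM cjV cjX ct cr.
have tz : trF z = 0 by rewrite trF_cj cz add2 trq0.
have [s hs] := AS tz.
set v := t * s.
have hv : v ^+ 2 + t * v = rho.
  have -> : v ^+ 2 + t * v = t ^+ 2 * (s ^+ 2 + s) by rewrite /v; ring.
  by rewrite hs /z mulrC divfK // expf_neq0.
have hcv : cj v ^+ 2 + t * cj v = rho.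
  by rewrite -cjX -{1}ct -cjM -cjD hv cr.
have key : (cj v + v) * (cj v + v + t) = 0.
  have -> : (cj v + v) * (cj v + v + t) =
     (cj v ^+ 2 + t * cj v) + (v ^+ 2 + t * v) + (v * cj v) *+ 2 by ring.
  by rewrite hv hcv add2 add0r (mulrn_pchar ch2).
move/eqP: key; rewrite mulf_eq0 => /orP[/eqP k1|/eqP k2].
  have cv : cj v = v by apply: ch2eq.
  have cs : cj s = s.
    have -> : s = v / t by rewrite /v [t * s]mulrC mulfK.
    by rewrite cjM cjV cv ct.
  have e0 : trq (s ^+ 2 + s) = 0.
    by rewrite /trq (trnD ch2) (trn_sq ch2) -/(cj s) cs add2.
  have e1 : trq (s ^+ 2 + s) = 1.
    have cat : cj (alpha / t) = alpha / t by rewrite cjM cjV ca ct.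
    rewrite hs /z -ar -expr_div_n trq_sq //.
  by move: (oner_neq0 F); rewrite -e1 e0 eqxx.
have cv : cj v = v + t.
  by apply: ch2eq; rewrite addrA.
exists v; split.
  by rewrite cv mulrDr -expr2 (mulrC v t).
by rewrite trF_cj cv addrA add2 add0r.
Qed.


Lemma QR (b L K : F) : b != 0 -> L != 0 -> trF (b * K / L ^+ 2) = 0 ->
  exists y1 y2, [/\ y1 != y2, b * y1 ^+ 2 + L * y1 + K = 0 &
                              b * y2 ^+ 2 + L * y2 + K = 0].
Proof.
move=> b0 L0 tr; have [t ht] := AS tr.
have e0 : L ^+ 2 / b * (b * K / L ^+ 2) = K by field; apply/andP.
exists (L * t / b), (L * (t + 1) / b); split.
- apply/negP => /eqP e.
  have : L / b = 0.
    have -> : L / b = L * (t + 1) / b - L * t / b by field.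
    by rewrite e subrr.
  by move/eqP; rewrite mulf_eq0 invr_eq0 (negbTE L0) (negbTE b0).
- have -> : b * (L * t / b) ^+ 2 + L * (L * t / b) + K =
            L ^+ 2 / b * (t ^+ 2 + t) + K by field.
  by rewrite ht e0 add2.
- have -> : b * (L * (t + 1) / b) ^+ 2 + L * (L * (t + 1) / b) + K =
            L ^+ 2 / b * (t ^+ 2 + t) + K + (L ^+ 2 / b * (t + 1)) *+ 2.
    by rewrite -mulr_natr; field.
  by rewrite ht e0 add2 add0r (mulrn_pchar ch2).
Qed.

Lemma qaffE (a b c d e f x y : F) :
  qform a b c d e f (x, y, 1) = b * y ^+ 2 + (d * x + f) * y + (a * x ^+ 2 + e * x + c).
Proof. rewrite /qform /=; ring. Qed.

Lemma trFD x y : trF (x + y) = trF x + trF y.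
Proof. exact: (trnD ch2). Qed.

Lemma cjB x y : cj (x - y) = cj x - cj y.
Proof. by rewrite cjD cjN. Qed.

Lemma bit_add (s t : F) : (s = 0 \/ s = 1) -> (t = 0 \/ t = 1) -> (s + t = 0 \/ s + t = 1).
Proof.
by move=> [->|->] [->|->]; rewrite ?addr0 ?add0r ?add2; tauto.
Qed.

Lemma hard_0 (a b c e f u : F) : b != 0 -> f != 0 -> a * f ^+ 2 + b * e ^+ 2 != 0 ->
  cj u = u -> u != 0 ->
  exists x, x * cj x = u /\ trF (b * (a * x ^+ 2 + e * x + c) / f ^+ 2) = 0.
Proof.
move=> b0 f0 nd cu u0.
set g := sq (a * b / f ^+ 2).
set be := b * e / f ^+ 2 + g.
have be2 : be ^+ 2 = b / f ^+ 4 * (a * f ^+ 2 + b * e ^+ 2).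
  by rewrite /be (sqrD ch2) sqK; field.
have be0 : be != 0.
  apply/eqP => e0; move: be2; rewrite e0 expr0n /= => /esym/eqP.
  by rewrite mulf_eq0 mulf_eq0 invr_eq0 !expf_eq0 /= (negbTE b0) (negbTE f0) (negbTE nd).
have cb0 : cj be != 0 by rewrite cj_eq0.
set rho := be * cj be * u.
have cr : cj rho = rho by rewrite /rho !cjM cjK cu [cj be * be]mulrC.
have r0 : rho != 0 by rewrite /rho !mulf_neq0.
set tau := trF (b * c / f ^+ 2).
have [v [hv tv]] := CL cr r0 (trF01 (b * c / f ^+ 2)).
exists (v / be); split.
  rewrite cjM cjV.
  have -> : v / be * (cj v / cj be) = (v * cj v) / (be * cj be) by field; apply/andP.
  by rewrite hv /rho; field; apply/andP.
have -> : b * (a * (v / be) ^+ 2 + e * (v / be) + c) / f ^+ 2 =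
   b * c / f ^+ 2 + (b * e / f ^+ 2) * (v / be) + (g * (v / be)) ^+ 2.
  by rewrite /g [X in _ = _ + X]exprMn sqK; field; apply/andP.
rewrite !trFD trF_sq -addrA -trFD -mulrDl -/be.
have -> : be * (v / be) = v by field.
rewrite tv.
exact: add2.
Qed.

Lemma hard_d (a b c d e f u : F) : b != 0 -> d != 0 -> qform_nondeg a b c d e f ->
  cj u = u -> u != 0 -> f / d * cj (f / d) != u ->
  exists x, [/\ x * cj x = u, d * x + f != 0 &
     trF (b * (a * x ^+ 2 + e * x + c) / (d * x + f) ^+ 2) = 0].
Proof.
move=> b0 d0 nd cu u0 nfu.
set C := a * f ^+ 2 / d ^+ 2 + e * f / d + c.
set g := sq (b * C).
set be := b * e / d + g.
set A0 := a * b / d ^+ 2.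
have be2 : be ^+ 2 = b / d ^+ 2 * (d * e * f + a * f ^+ 2 + b * e ^+ 2 + c * d ^+ 2).
  by rewrite /be (sqrD ch2) /g sqK /C; field.
have be0 : be != 0.
  apply/eqP => e0; move: be2; rewrite e0 expr0n /= => /esym/eqP.
  by rewrite mulf_eq0 mulf_eq0 invr_eq0 !expf_eq0 /= (negbTE b0) (negbTE d0) (negbTE nd).
have trK x : d * x + f != 0 ->
    trF (b * (a * x ^+ 2 + e * x + c) / (d * x + f) ^+ 2) = trF A0 + trF (be / (d * x + f)).
  move=> L0; set L := d * x + f.
  have hx : x = (L - f) / d by rewrite /L; field.
  have E2 : b * (a * x ^+ 2 + e * x + c) / L ^+ 2 + (A0 + (b * e / d) / L + (b * C) / L ^+ 2) =
     (A0 + (b * e / d) / L + (b * C) / L ^+ 2 - a * b * f / (d ^+ 2 * L) - b * e * f / (d * L ^+ 2)) *+ 2.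
    by rewrite -mulr_natr hx /A0 /C; field; rewrite L0 d0.
  rewrite (mulrn_pchar ch2) in E2; rewrite (ch2eq E2) !trFD.
  have -> : b * C / L ^+ 2 = (g / L) ^+ 2 by rewrite expr_div_n /g sqK.
  by rewrite trF_sq -addrA -[trF (_ / L) + _]trFD -mulrDl.
set D := cj d; set Fc := cj f; set Bc := cj be.
have D0 : D != 0 by rewrite cj_eq0.
have Bc0 : Bc != 0 by rewrite cj_eq0.
set r := d * D * u.
set k := f * Fc - r.
have hr : r = f * Fc - k by rewrite /k; ring.
have k0 : k != 0.
  apply: contraNneq nfu => k0.
  rewrite cjM cjV -/D -/Fc.
  have : f * Fc = d * D * u by apply/eqP; rewrite -subr_eq0 -/r -/k k0.
  move=> e0; apply/eqP.
  have -> : f / d * (Fc / D) = (f * Fc) / (d * D) by field; apply/andP.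
  by rewrite e0; field; apply/andP.
have ck : cj k = k.
  by rewrite /k /r /D /Fc cjB !cjM !cjK cu; ring.
set del := Bc * f / k.
have cdel : cj del = be * Fc / k by rewrite /del !cjM cjV cjK ck.
set rho := be * Bc * r / k ^+ 2.
have crho : cj rho = rho.
  by rewrite /rho /r /Bc /D cjM cjV cjX ck !cjM !cjK cu; congr (_ / _); ring.
have rho0 : rho != 0 by rewrite /rho /r !mulf_neq0 ?invr_eq0 ?expf_neq0.
have [v [hv tv]] := CL crho rho0 (bit_add (trF01 A0) (trF01 (cj del))).
have v0 : v != 0 by apply: contraNneq rho0 => v0; rewrite -hv v0 mul0r.
have hV : cj v = rho / v by rewrite -hv; field.
set w := v + cj del.
set W := cj w.
have hW : W = cj v + del by rewrite /W /w cjD cjK.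
have E : be * Bc - (be * Fc * W + f * Bc * w) + k * w * W = 0.
  rewrite hW hV /w cdel /del /rho hr; by field; rewrite k0 v0.
have w0 : w != 0.
  apply: contraNneq (mulf_neq0 be0 Bc0) => w0.
  by move: E; rewrite /W w0 cj0 !(mulr0, mul0r) !addr0 subr0 => ->.
have W0 : W != 0 by rewrite cj_eq0.
exists ((be / w - f) / d).
have hL : d * ((be / w - f) / d) + f = be / w by field; rewrite ?d0 ?w0.
have L0 : d * ((be / w - f) / d) + f != 0 by rewrite hL mulf_neq0 ?invr_eq0.
split => //.
- rewrite cjM cjV cjB cjM cjV -/D -/Fc -/Bc -/W.
  have P : (be - f * w) * (Bc - Fc * W) = r * w * W.
    have -> : (be - f * w) * (Bc - Fc * W) =
      (be * Bc - (be * Fc * W + f * Bc * w) + k * w * W) + (f * Fc - k) * w * W by ring.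
    by rewrite E add0r -hr.
  have -> : (be / w - f) / d * ((Bc / W - Fc) / D) =
     ((be - f * w) * (Bc - Fc * W)) / (w * W * d * D) by field; rewrite w0 W0 d0 D0.
  by rewrite P /r; field; rewrite w0 W0 d0 D0.
- rewrite trK // hL.
  have -> : be / (be / w) = w by field; rewrite be0 w0.
  by rewrite /w trFD tv -addrA add2 addr0 add2.
Qed.

Lemma main_u (a b c d e f u : F) (Om : pred (F * F * F)) :
  qform_nondeg a b c d e f ->
  (forall v : F * F * F, Om v = (v != (0, 0, 0)) &&
      ((qform a b c d e f v == 0) || [exists k : F, v == pscale k (qnucleus a b c d e f)])) ->
  cj u = u -> u != 0 ->
  exists p1 p2 : F * F, [/\ p1 != p2, Om (p1.1, p1.2, 1), Om (p2.1, p2.2, 1),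
      p1.1 * cj p1.1 = u & p2.1 * cj p2.1 = u].
Proof.
move=> nd HOm cu u0.
have nz x y : (x, y, 1) != (0, 0, 0) :> F * F * F.
  by apply/negP => /eqP [] _ _ /eqP; rewrite oner_eq0.
have onC x y : qform a b c d e f (x, y, 1) = 0 -> Om (x, y, 1).
  by move=> q0; rewrite HOm nz q0 eqxx.
have onN : d != 0 -> Om (f / d, e / d, 1).
  move=> d0; rewrite HOm nz /=; apply/orP; right; apply/existsP; exists d^-1.
  by rewrite /pscale /qnucleus /= mulVf // [d^-1 * f]mulrC [d^-1 * e]mulrC.
have two_x : (forall x, exists y, Om (x, y, 1)) ->
  exists p1 p2 : F * F, [/\ p1 != p2, Om (p1.1, p1.2, 1), Om (p2.1, p2.2, 1),
      p1.1 * cj p1.1 = u & p2.1 * cj p2.1 = u].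
  move=> allx.
  have [v0 [h0 t0]] := CL cu u0 (or_introl (erefl (0 : F))).
  have [v1 [h1' t1]] := CL cu u0 (or_intror (erefl (1 : F))).
  have [y0 o0] := allx v0; have [y1 o1] := allx v1.
  exists (v0, y0), (v1, y1); split => //.
  apply/negP => /eqP [] e0 _; move: t1; rewrite -e0 t0 => /esym/eqP.
  by rewrite oner_eq0.
have two_y : forall x y1 y2, y1 != y2 -> x * cj x = u -> Om (x, y1, 1) -> Om (x, y2, 1) ->
  exists p1 p2 : F * F, [/\ p1 != p2, Om (p1.1, p1.2, 1), Om (p2.1, p2.2, 1),
      p1.1 * cj p1.1 = u & p2.1 * cj p2.1 = u].
  move=> x y1 y2 ne hx o1 o2; exists (x, y1), (x, y2); split => //.
  by apply/negP => /eqP [] /eqP; rewrite (negbTE ne).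
have [b0|b0] := eqVneq b 0.
  apply: two_x => x.
  have [L0|L0] := eqVneq (d * x + f) 0.
    have d0 : d != 0.
      apply/negP => /eqP d0; move: L0 nd; rewrite d0 b0 mul0r add0r => ->.
      by rewrite /qform_nondeg !(mulr0, mul0r, expr0n) /= !addr0 eqxx.
    have -> : x = f / d.
      apply: (mulfI d0); rewrite [d * (f / d)]mulrC divfK //; apply: ch2eq; exact: L0.
    by exists (e / d); apply: onN.
  exists ((a * x ^+ 2 + e * x + c) / (d * x + f)); apply: onC.
  by rewrite qaffE b0 mul0r add0r mulrC divfK // add2.
have [/andP[d0 f0]|dfn] := boolP ((d == 0) && (f == 0)).
  apply: two_x => x; exists (sq ((a * x ^+ 2 + e * x + c) / b)); apply: onC.
  by rewrite qaffE (eqP d0) (eqP f0) mul0r add0r mul0r addr0 sqK mulrC divfK // add2.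
have [d0|d0] := eqVneq d 0.
  have f0 : f != 0 by move: dfn; rewrite d0 eqxx.
  have nd' : a * f ^+ 2 + b * e ^+ 2 != 0.
    by move: nd; rewrite /qform_nondeg d0 !(mulr0, mul0r, expr0n) /= add0r addr0.
  have [x [hx tx]] := hard_0 c b0 f0 nd' cu u0.
  have [y1 [y2 [ne e1 e2]]] := QR b0 f0 tx.
  apply: (two_y x y1 y2) => //; apply: onC; rewrite qaffE d0 mul0r add0r //.
have [hfu|hfu] := eqVneq (f / d * cj (f / d)) u.
  set y0 := sq ((a * (f / d) ^+ 2 + e * (f / d) + c) / b).
  have q0 : qform a b c d e f (f / d, y0, 1) = 0.
    rewrite qaffE /y0 sqK mulrC divfK //.
    have -> : d * (f / d) + f = 0 by rewrite mulrC divfK // add2.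
    by rewrite mul0r addr0 add2.
  apply: (two_y (f / d) y0 (e / d)) => //; last by apply: onN.
    apply/negP => /eqP ye; move: q0; rewrite ye => /eqP; apply/negP.
    have -> : qform a b c d e f (f / d, e / d, 1) =
       (d * e * f + a * f ^+ 2 + b * e ^+ 2 + c * d ^+ 2) / d ^+ 2 + (f * e / d) *+ 2.
      by rewrite qaffE -mulr_natr; field.
    by rewrite (mulrn_pchar ch2) addr0 mulf_neq0 // invr_eq0 expf_neq0.
  by apply: onC.
have [x [hx L0 tx]] := hard_d b0 d0 nd cu u0 hfu.
have [y1 [y2 [ne e1 e2]]] := QR b0 L0 tx.
by apply: (two_y x y1 y2) => //; apply: onC; rewrite qaffE.
Qed.

End Fq.

Unset Implicit Arguments. Set Strict Implicit.

Theorem lemma3p2 (h : nat) (F : finFieldType) (U : {set F})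
    (Om : pred (F * F * F)) :
  (1 < h)%N ->
  #|F| = ((2 ^ h) ^ 2)%N ->
  U != set0 ->
  U \proper subfield_units F (2 ^ h) ->
  regular_hyperoval Om ->
  (2 <= #|[set p : F * F | Om (p.1, p.2, 1%R) && (p.1 ^+ (2 ^ h).+1 \in U)]|)%N.
Proof.
move=> h1 hF' /set0Pn [u uU] /properP [sub _] [a [b [c [d [e [f [nd HOm]]]]]]].
have h0 : (0 < h)%N by apply: ltnW.
have hF : #|F| = (2 ^ (h + h))%N by rewrite hF' -expnM muln2 addnn.
have := subsetP sub u uU; rewrite inE => /andP [/eqP cu u0].
have [p1 [p2 [ne o1 o2 n1 n2]]] := main_u h0 hF nd HOm cu u0.
apply/card_gt1P; exists p1, p2; split => //; rewrite inE ?o1 ?o2 /=.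
  by rewrite exprS n1.
by rewrite exprS n2.
Qed.
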